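(* For every integer $q\ge 5$ there exists an $\mathcal{SOS}_q(2)$ of period $\frac{q(q-4)}{4}$ if $q\equiv 0\pmod 4$, $\frac{(q+1)(q-1)}{4}$ if $q\equiv 1\pmod 4$, $\frac{q(q-2)}{4}$ if $q\equiv 2\pmod 4$, and $\frac{(q+1)(q-3)}{4}$ if $q\equiv 3\pmod 4$.
   Context: For a periodic sequence $S=(s_i)$ over $\mathbb{Z}_q$ write $\mathbf{s}_n(i)=(s_i,\ldots,s_{i+n-1})$; $\mathbf{u}^R$ denotes the reverse of a tuple and $-\mathbf{u}$ its termwise negative. An $\mathcal{SOS}_q(n)$ is a periodic sequence of period $m$ over $\mathbb{Z}_q$ such that $\mathbf{s}_n(i)=\mathbf{s}_n(j)$ implies $i\equiv j\pmod m$, and $\mathbf{s}_n(i)\neq\mathbf{s}_n(j)^R$ and $\mathbf{s}_n(i)\neq-\mathbf{s}_n(j)^R$ for all $i,j$. *)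

(* Defs.v *)
From mathcomp Require Import all_boot all_algebra.
Set Implicit Arguments. Unset Strict Implicit. Unset Printing Implicit Defensive.
Import GRing.Theory.
Local Open Scope ring_scope.

Definition periodic (q : nat) (s : nat -> 'Z_q) (m : nat) : Prop :=
  (0 < m)%N /\ forall i, s (i + m)%N = s i.

Definition window (q : nat) (s : nat -> 'Z_q) (n i : nat) : seq 'Z_q :=
  [seq s (i + k)%N | k <- iota 0 n].

Definition negw (q : nat) (u : seq 'Z_q) : seq 'Z_q := [seq - x | x <- u].

Definition is_SOS (q n : nat) (s : nat -> 'Z_q) (m : nat) : Prop :=
  periodic s m /\
  (forall i j, window s n i = window s n j -> i = j %[mod m]) /\
  (forall i j, window s n i <> rev (window s n j)) /\
  (forall i j, window s n i <> negw (rev (window s n j))).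

Definition cor_period (q : nat) : nat :=
  match (q %% 4)%N with
  | 0 => (q * (q - 4)) %/ 4
  | 1 => ((q + 1) * (q - 1)) %/ 4
  | 2 => (q * (q - 2)) %/ 4
  | _ => ((q + 1) * (q - 3)) %/ 4
  end.

(* Main.v *)
Require Import Defs.
From mathcomp Require Import all_boot all_algebra.
From mathcomp Require Import zify.
Set Implicit Arguments. Unset Strict Implicit. Unset Printing Implicit Defensive.

Definition sg (q : nat) (b : bool) (a : nat) : 'Z_q :=
  if b then (- (inZp a : 'Z_q))%R else inZp a.

Lemma val_neg q (x : 'Z_q) : val (- x)%R = ((Zp_trunc q).+2 - val x) %% (Zp_trunc q).+2.
Proof. by []. Qed.
Lemma val_in q a : val (inZp a : 'Z_q) = a %% (Zp_trunc q).+2.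
Proof. by []. Qed.

Lemma val_sg q b a : 1 < q -> a < q ->
  val (sg q b a) = if b then (q - a) %% q else a.
Proof.
move=> q1 aq; rewrite /sg; case: b.
  by rewrite val_neg val_in (Zp_cast q1) (modn_small aq).
by rewrite val_in (Zp_cast q1) (modn_small aq).
Qed.

Lemma modsub q a : 0 < a < q -> (q - a) %% q = q - a.
Proof. move=> /andP[a0 aq]; rewrite modn_small //; lia. Qed.

Lemma sg_inj q b b' a a' : 1 < q -> 2 * a < q -> 2 * a' < q ->
  sg q b a = sg q b' a' -> a = a' /\ (a != 0 -> b = b').
Proof.
move=> q1 ha ha' /(congr1 val); rewrite !val_sg; try lia.
have [->|a0] := eqVneq a 0; have [->|a0'] := eqVneq a' 0;
  case: b; case: b' => //=; rewrite ?subn0 ?modnn ?modsub; try lia.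
Qed.

Lemma neg_sg q b a : (- sg q b a = sg q (~~ b) a)%R.
Proof. by case: b; rewrite /sg /= ?GRing.opprK. Qed.
Definition W (L : nat) (x : nat -> nat) (i : nat) := x (i %% L).
Definition Bs (L : nat) (e : nat -> bool) (i : nat) := odd (i %/ L) (+) e (i %% L).
Definition sq (q L : nat) (x : nat -> nat) (e : nat -> bool) (i : nat) : 'Z_q :=
  sg q (Bs L e i) (W L x i).
Definition rho L (e : nat -> bool) p := e p (+) e ((p + 1) %% L) (+) (p == L.-1).

Lemma divS_small p L : p < L -> (p + 1) %/ L = (p == L.-1) /\ (p + 1) %% L = if p == L.-1 then 0 else p + 1.
Proof.
move=> pL; have [E|E] := eqVneq p L.-1.
  have -> : p + 1 = 1 * L by lia.
  by rewrite mulnK ?mul1n ?modnn //; lia.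
rewrite divn_small ?modn_small //; lia.
Qed.

Lemma Bs_succ L e i : 0 < L -> Bs L e (i + 1) = Bs L e i (+) rho L e (i %% L).
Proof.
move=> L0; rewrite /Bs /rho.
have Hi : i = i %/ L * L + i %% L := divn_eq i L.
have pL : i %% L < L := ltn_pmod i L0.
move: Hi pL; set a := i %/ L; set p := i %% L => Hi pL.
rewrite [in LHS]Hi -addnA divnMDl // modnMDl oddD.
have [D M] := divS_small pL; rewrite D.
by case: (p == L.-1); case: (odd a); case: (e p); case: (e _).
Qed.

Lemma W_succ L x i : W L x (i + 1) = x ((i %% L + 1) %% L).
Proof. by rewrite /W modnDml. Qed.

Lemma mod2L L i : 0 < L -> i %% (2 * L) = odd (i %/ L) * L + i %% L.
Proof.
move=> L0.
have Hi : i = i %/ L * L + i %% L := divn_eq i L.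
have Ha : i %/ L = i %/ L %/ 2 * 2 + odd (i %/ L) by rewrite -modn2 -divn_eq.
have pL : i %% L < L := ltn_pmod i L0.
move: Hi Ha pL; set a := i %/ L; set p := i %% L; set b := a %/ 2 => Hi Ha pL.
have -> : i = b * (2 * L) + (odd a * L + p) by rewrite {1}Hi {1}Ha; lia.
rewrite modnMDl modn_small //; case: (odd a) => /=; lia.
Qed.

Lemma sos_abs q L (x : nat -> nat) (e : nat -> bool) :
  1 < q -> 0 < L ->
  (forall p, p < L -> 2 * x p < q) ->
  (forall p p', p < L -> p' < L -> ~ (x p = x ((p' + 1) %% L) /\ x ((p + 1) %% L) = x p')) ->
  (forall p p', p < L -> p' < L -> x p = x p' -> x ((p + 1) %% L) = x ((p' + 1) %% L) ->
     (x p != 0 -> x ((p + 1) %% L) != 0 -> rho L e p = rho L e p') -> p = p') ->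
  is_SOS 2 (sq q L x e) (2 * L).
Proof.
move=> q1 L0 Hx Hanti Hinj.
have HW : forall i, 2 * W L x i < q by move=> i; apply: Hx; exact: ltn_pmod.
have HW1 : forall i, 2 * x ((i %% L + 1) %% L) < q by move=> i; apply: Hx; exact: ltn_pmod.
have win : forall i, window (sq q L x e) 2 i = [:: sq q L x e i; sq q L x e (i + 1)].
  by move=> i; rewrite /window /= addn0.
split; [|split; [|split]].
- split; first lia.
  move=> i; rewrite /sq /W /Bs.
  have -> : i + 2 * L = 2 * L + i by lia.
  rewrite modnMDl divnMDl // oddD /=.
  by [].
- move=> i j; rewrite !win => -[E1 E2].
  have [Wij Bij] := sg_inj q1 (HW i) (HW j) E1.
  move: E2; rewrite /sq W_succ (W_succ L x j) => E2.
  have [Wij1 Bij1] := sg_inj q1 (HW1 i) (HW1 j) E2.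
  have pL := ltn_pmod i L0; have pL' := ltn_pmod j L0.
  have Epp : i %% L = j %% L.
    apply: Hinj => //.
    move=> nz nz1.
    have h1 := Bij nz; have h2 := Bij1 nz1.
    rewrite !Bs_succ // h1 in h2.
    by move: h2; case: (Bs L e j); case: (rho L e (i %% L)); case: (rho L e (j %% L)).
  rewrite /= !mod2L //; rewrite Epp; congr (_ * _ + _).
  apply/eqP; apply: contraT => Hodd.
  have Bne : Bs L e i != Bs L e j by rewrite /Bs Epp; move: Hodd; case: (odd _); case: (odd _); case: (e _).
  have W0 : W L x i = 0 by apply/eqP; apply: contraT => nz; rewrite (Bij nz) eqxx in Bne.
  have W10 : x ((i %% L + 1) %% L) = 0.
    apply/eqP; apply: contraT => nz; have := Bij1 nz.
    rewrite !Bs_succ // Epp.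
    by move: Bne; case: (Bs L e i); case: (Bs L e j); case: (rho _ _ _).
  exfalso; apply: (Hanti _ _ pL pL); move: W0; rewrite /W => ->; by rewrite W10.
- move=> i j; rewrite !win /rev /= => -[E1 E2].
  have [Wij _] := sg_inj q1 (HW i) (HW _) E1.
  move: E2; rewrite /sq W_succ => E2.
  have [Wij1 _] := sg_inj q1 (HW1 i) (HW j) E2.
  apply: (Hanti (i %% L) (j %% L)); try exact: ltn_pmod.
  by move: Wij Wij1; rewrite W_succ /W => -> ->.
- move=> i j; rewrite !win /rev /negw /= => -[E1 E2].
  move: E1 E2; rewrite /sq !neg_sg => E1 E2.
  have [Wij _] := sg_inj q1 (HW i) (HW _) E1.
  move: E2; rewrite W_succ => E2.
  have [Wij1 _] := sg_inj q1 (HW1 i) (HW j) E2.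
  apply: (Hanti (i %% L) (j %% L)); try exact: ltn_pmod.
  by move: Wij Wij1; rewrite W_succ /W => -> ->.
Qed.

Fixpoint T (c : nat) : nat := if c is c'.+1 then T c' + c'.+1 else 0.

Lemma T2 c : 2 * T c = c * (c + 1).
Proof. elim: c => [|c IH] //=; lia. Qed.

Definition c0 K (cyc : bool) := if cyc then K else 0.
Definition LL K cyc := (2 * K + 1) * K + c0 K cyc.
Definition ex K e := (1 + e %/ K * T K + T (e %% K)) %% (2 * K + 1).
Definition xg K cyc p := if cyc && (p < K) then 2 * p + 1 else ex K (p - c0 K cyc).
Definition stg K cyc p :=
  if cyc && (p < K) then (if p < K.-1 then 2 else 3) else (p - c0 K cyc) %% K + 1.
Definition eg K cyc p := if cyc && (p < K) then odd p else cyc && odd K.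

Lemma ex1 K e : 0 < K -> ex K e.+1 = (ex K e + (e %% K + 1)) %% (2 * K + 1).
Proof.
move=> K0; rewrite /ex modnDml.
have He : e = e %/ K * K + e %% K := divn_eq e K.
have cK : e %% K < K := ltn_pmod e K0.
move: He cK; set r := e %/ K; set c := e %% K => He cK.
have [lt|eq] : c.+1 < K \/ c.+1 = K by lia.
  have -> : e.+1 = r * K + c.+1 by lia.
  rewrite divnMDl // modnMDl (divn_small lt) (modn_small lt) addn0 /=.
  congr (_ %% _); lia.
have -> : e.+1 = r.+1 * K + 0 by rewrite mulSn; lia.
rewrite divnMDl // modnMDl div0n mod0n addn0 /=.
congr (_ %% _); rewrite -eq /=; lia.
Qed.

Lemma ex0 K : 0 < K -> ex K 0 = 1.
Proof. move=> K0; by rewrite /ex div0n mod0n /= modn_small //; lia. Qed.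

Lemma exn K : 0 < K -> ex K ((2 * K + 1) * K) = 1.
Proof.
move=> K0; rewrite /ex mulnK // modnMl /= addn0.
by rewrite addnC mulnC modnMDl modn_small //; lia.
Qed.

Lemma LLgt K (cyc : bool) : 0 < K -> K < LL K cyc.
Proof. rewrite /LL /c0 => K0; case: cyc; nia. Qed.

Lemma step K (cyc : bool) p : 0 < K -> (cyc -> 3 <= K) -> p < LL K cyc ->
  xg K cyc ((p + 1) %% LL K cyc) = (xg K cyc p + stg K cyc p) %% (2 * K + 1).
Proof.
move=> K0 K3 pL; have KL := LLgt cyc K0.
rewrite /xg /stg.
case: cyc K3 pL KL => K3 pL KL; rewrite /c0 /=.
  case: (ltnP p K) => pK.
    rewrite modn_small; last lia.
    case: (ltnP (p + 1) K) => p1K.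
      rewrite ifT; last lia.
      rewrite modn_small //; lia.
    rewrite ifF; last lia.
    have -> : p + 1 - K = 0 by lia.
    rewrite ex0 //.
    have -> : 2 * p + 1 + 3 = 1 * (2 * K + 1) + 1 by lia.
    by rewrite modnMDl modn_small //; lia.
  have [lt|eq] : p + 1 < LL K true \/ p + 1 = LL K true by lia.
    rewrite modn_small // ifF; last lia.
    have -> : p + 1 - K = (p - K).+1 by lia.
    by rewrite ex1.
  rewrite eq modnn /= -ex1 //.
  have -> : (p - K).+1 = (2 * K + 1) * K by move: eq; rewrite /LL /c0; lia.
  by rewrite exn // K0.
rewrite !subn0.
have [lt|eq] : p + 1 < LL K false \/ p + 1 = LL K false by lia.
  rewrite modn_small // addn1.
  by rewrite ex1.
rewrite eq modnn -ex1 //.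
have -> : p.+1 = (2 * K + 1) * K by move: eq; rewrite /LL /c0; lia.
by rewrite exn // ex0.
Qed.

Lemma xg_lt K (cyc : bool) p : 0 < K -> xg K cyc p < 2 * K + 1.
Proof.
move=> K0; rewrite /xg; case: ifP => [/andP[_ pK]|_]; first lia.
by rewrite /ex ltn_pmod //; lia.
Qed.

Lemma stg_b K (cyc : bool) p : 0 < K -> (cyc -> 3 <= K) -> 0 < stg K cyc p <= K.
Proof.
move=> K0 K3; rewrite /stg; case: ifP => [/andP[c pK]|_].
  have := K3 c; case: ifP => _; lia.
have := ltn_pmod (p - c0 K cyc) K0; lia.
Qed.

Lemma anti_gen K (cyc : bool) p p' : 0 < K -> (cyc -> 3 <= K) ->
  p < LL K cyc -> p' < LL K cyc ->
  ~ (xg K cyc p = xg K cyc ((p' + 1) %% LL K cyc) /\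
     xg K cyc ((p + 1) %% LL K cyc) = xg K cyc p').
Proof.
move=> K0 K3 pL pL' [E1 E2].
move: E1; rewrite (step K0 K3 pL') -E2 (step K0 K3 pL) modnDml -addnA => E1.
have := stg_b p K0 K3; have := stg_b p' K0 K3 => h1 h2.
have : xg K cyc p + 0 = xg K cyc p + (stg K cyc p + stg K cyc p') %[mod 2 * K + 1].
  by rewrite addn0 -E1 modn_small // xg_lt.
move/eqP; rewrite eqn_modDl mod0n modn_small; lia.
Qed.

Lemma st_eq K (cyc : bool) p p' : 0 < K -> (cyc -> 3 <= K) ->
  p < LL K cyc -> p' < LL K cyc -> xg K cyc p = xg K cyc p' ->
  xg K cyc ((p + 1) %% LL K cyc) = xg K cyc ((p' + 1) %% LL K cyc) ->
  stg K cyc p = stg K cyc p'.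
Proof.
move=> K0 K3 pL pL' E1; rewrite (step K0 K3 pL) (step K0 K3 pL') E1 => /eqP.
rewrite eqn_modDl.
have := stg_b p K0 K3; have := stg_b p' K0 K3 => h1 h2.
rewrite !modn_small; [by move/eqP| lia | lia].
Qed.

Lemma cop_n K : coprime (2 * K + 1) (K * (K + 1)).
Proof.
rewrite coprimeMr; apply/andP; split.
  rewrite coprime_sym /coprime.
  by rewrite gcdnMDl gcdn1.
rewrite coprime_sym /coprime.
have -> : 2 * K + 1 = 1 * (K + 1) + K by lia.
rewrite gcdnMDl gcdnC.
have -> : K + 1 = 1 * K + 1 by lia.
by rewrite gcdnMDl gcdn1.
Qed.

Lemma cop K r r' : r < 2 * K + 1 -> r' < 2 * K + 1 ->
  r * T K = r' * T K %[mod 2 * K + 1] -> r = r'.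
Proof.
wlog le : r r' / r' <= r.
  move=> H h1 h2 E; case: (leqP r' r) => h; first exact: H.
  by apply/esym/H => //; lia.
move=> h1 h2 /eqP; rewrite eqn_mod_dvd ?leq_mul2r ?le ?orbT // -mulnBl => D.
have : 2 * K + 1 %| (r - r') * (K * (K + 1)).
  by rewrite -T2 mulnCA dvdn_mull.
rewrite Gauss_dvdl ?cop_n //.
have [E|nz] := eqVneq (r - r') 0; first by move=> _; lia.
move/dvdn_leq; lia.
Qed.

Lemma c0_le K (cyc : bool) p : ~~ (cyc && (p < K)) -> c0 K cyc <= p.
Proof. rewrite /c0; case: cyc => //=; lia. Qed.

Lemma rho_cyc K p : 0 < K -> p < K -> rho (LL K true) (eg K true) p = true.
Proof.
move=> K0 pK; have KL := LLgt true K0.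
rewrite /rho /eg /= pK modn_small; last lia.
have -> : (p == (LL K true).-1) = false by apply/eqP; lia.
case: (ltnP (p + 1) K) => h; first by rewrite oddD; case: (odd p).
have -> : K = p + 1 by lia.
by rewrite oddD; case: (odd p).
Qed.

Lemma rho_eul K p : 0 < K -> K <= p -> p < LL K true ->
  rho (LL K true) (eg K true) p = (p == (LL K true).-1) && ~~ odd K.
Proof.
move=> K0 pK pL; rewrite /rho /eg /=.
have -> : (p < K) = false by lia.
have [lt|eq] : p + 1 < LL K true \/ p + 1 = LL K true by lia.
  rewrite modn_small // ifF; last lia.
  have -> : (p == (LL K true).-1) = false by apply/eqP; lia.
  by case: (odd K).
rewrite eq modnn K0 /=.
have -> : (p == (LL K true).-1) = true by apply/eqP; lia.
by case: (odd K).
Qed.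

Lemma stg_last K : 0 < K -> stg K true (LL K true).-1 = K.
Proof.
move=> K0; rewrite /stg /LL /c0 /= mulnDl mul1n.
have h1 : forall P, (P + K + K).-1 < K = false by move=> P; lia.
have h2 : forall P, (P + K + K).-1 - K = P + K.-1 by move=> P; lia.
rewrite h1 h2 modnMDl modn_small; lia.
Qed.

Lemma e_bound K (cyc : bool) p : c0 K cyc <= p -> p < LL K cyc -> p - c0 K cyc < (2 * K + 1) * K.
Proof. rewrite /LL; move: ((2 * K + 1) * K) => N; lia. Qed.

Lemma inj_gen K (cyc : bool) p p' : 0 < K -> (cyc -> 3 <= K) ->
  p < LL K cyc -> p' < LL K cyc -> xg K cyc p = xg K cyc p' ->
  xg K cyc ((p + 1) %% LL K cyc) = xg K cyc ((p' + 1) %% LL K cyc) ->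
  (xg K cyc p != 0 -> xg K cyc ((p + 1) %% LL K cyc) != 0 ->
     rho (LL K cyc) (eg K cyc) p = rho (LL K cyc) (eg K cyc) p') -> p = p'.
Proof.
move=> K0 K3 pL pL' E1 E2 R.
have S := st_eq K0 K3 pL pL' E1 E2.
have nz : forall u, u < LL K cyc -> cyc && (u < K) ->
    xg K cyc u != 0 /\ xg K cyc ((u + 1) %% LL K cyc) != 0.
  move=> u uL /andP[c uK]; move: K3 uL; rewrite c => K3 uL.
  have KL := LLgt true K0.
  rewrite /xg /= uK modn_small; last lia.
  split; first lia.
  case: ifP => _; first lia.
  have -> : u + 1 - c0 K true = 0 by rewrite /c0; lia.
  by rewrite ex0.
have mixed : forall u u', cyc -> u < K -> K <= u' -> u' < LL K cyc ->
    stg K cyc u = stg K cyc u' ->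
    rho (LL K cyc) (eg K cyc) u = rho (LL K cyc) (eg K cyc) u' -> False.
  move=> u u' c uK uK' uL'; move: K3 uL'; rewrite c => K3 uL'.
  rewrite rho_cyc // rho_eul // => Su /esym/andP[/eqP ul oK].
  move: Su; rewrite ul stg_last // /stg /= uK.
  have := K3 isT; move: oK; case: ifP => _ oK K3' Su; subst K => //.
case Hp: (cyc && (p < K)); case Hp': (cyc && (p' < K)).
- move: E1; rewrite /xg Hp Hp'; lia.
- have [n1 n2] := nz p pL Hp.
  have := R n1 n2; move/andP: Hp => [c pK] => R'.
  exfalso; apply: (mixed p p' c pK) => //.
  by move: Hp'; rewrite c /=; lia.
- have [n1 n2] := nz p' pL' Hp'.
  rewrite E1 E2 in R; have := R n1 n2; move/andP: Hp' => [c pK] => R'.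
  exfalso; apply: (mixed p' p c pK) => //.
  by move: Hp; rewrite c /=; lia.
- have l1 := c0_le (negbT Hp); have l2 := c0_le (negbT Hp').
  move: S E1; rewrite /xg /stg Hp Hp' => /eqP; rewrite eqn_add2r => /eqP Sc.
  rewrite /ex Sc => E1.
  set e := p - c0 K cyc in Sc E1; set e' := p' - c0 K cyc in Sc E1.
  have eL : e < (2 * K + 1) * K by apply: e_bound.
  have eL' : e' < (2 * K + 1) * K by apply: e_bound.
  have r1 : e %/ K < 2 * K + 1 by rewrite ltn_divLR.
  have r2 : e' %/ K < 2 * K + 1 by rewrite ltn_divLR.
  have : e %/ K * T K + (1 + T (e' %% K)) = e' %/ K * T K + (1 + T (e' %% K)) %[mod 2 * K + 1].
    by move: E1; rewrite !addnA ![_ + 1]addnC.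
  move/eqP; rewrite eqn_modDr => /eqP /(cop r1 r2) Er.
  have : e = e' by rewrite (divn_eq e K) (divn_eq e' K) Er Sc.
  by rewrite /e /e' => Ee; rewrite -(subnK l1) -(subnK l2) Ee.
Qed.

Lemma gen_sos q K (cyc : bool) : 0 < K -> (cyc -> 3 <= K) -> 4 * K < q ->
  is_SOS 2 (sq q (LL K cyc) (xg K cyc) (eg K cyc)) (2 * LL K cyc).
Proof.
move=> K0 K3 Kq.
apply: sos_abs.
- lia.
- have := LLgt cyc K0; lia.
- move=> p _; have := xg_lt cyc p K0; lia.
- move=> p p' pL pL'; exact: anti_gen.
- move=> p p' pL pL'; exact: inj_gen.
Qed.

Lemma all2 (L : nat) (P : nat -> nat -> bool) :
  all (fun p => all (P p) (iota 0 L)) (iota 0 L) -> forall p p', p < L -> p' < L -> P p p'.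
Proof.
move=> /allP H p p' pL pL'.
have Hp : p \in iota 0 L by rewrite mem_iota; lia.
by move: (H p Hp) => /allP; apply; rewrite mem_iota; lia.
Qed.

Definition chk_anti L (x : nat -> nat) p p' :=
  ~~ ((x p == x ((p' + 1) %% L)) && (x ((p + 1) %% L) == x p')).
Definition chk_inj L (x : nat -> nat) (e : nat -> bool) p p' :=
  (x p == x p') ==> (x ((p + 1) %% L) == x ((p' + 1) %% L)) ==>
  ((x p != 0) ==> (x ((p + 1) %% L) != 0) ==> (rho L e p == rho L e p')) ==> (p == p').

Lemma small_sos q L (x : nat -> nat) (e : nat -> bool) :
  1 < q -> 0 < L ->
  all (fun p => 2 * x p < q) (iota 0 L) ->
  all (fun p => all (chk_anti L x p) (iota 0 L)) (iota 0 L) ->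
  all (fun p => all (chk_inj L x e p) (iota 0 L)) (iota 0 L) ->
  is_SOS 2 (sq q L x e) (2 * L).
Proof.
move=> q1 L0 /allP H1 H2 H3.
apply: sos_abs => //.
- by move=> p pL; apply: H1; rewrite mem_iota; lia.
- move=> p p' pL pL' [E1 E2].
  by have := all2 H2 pL pL'; rewrite /chk_anti E1 E2 !eqxx.
- move=> p p' pL pL' E1 E2 R.
  have := all2 H3 pL pL'; rewrite /chk_inj E1 E2 !eqxx /=.
  move/implyP => H; apply/eqP; apply: H.
  rewrite -E1 -E2; apply/implyP => n1; apply/implyP => n2; apply/eqP; exact: R.
Qed.

Definition xs1 p := nth 0 [:: 0; 1; 2; 3] p.
Definition es1 (p : nat) := false.
Definition xs2 p := nth 0 [:: 0; 1; 2; 0; 3; 1; 2; 3; 1; 4; 2; 5] p.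
Definition es2 p := nth false [:: false; false; false; false; false; false; true; false; true; false; false; false] p.

Lemma sp7 : is_SOS 2 (sq 7 4 xs1 es1) (2 * 4).
Proof. by apply: small_sos; vm_compute. Qed.
Lemma sp8 : is_SOS 2 (sq 8 4 xs1 es1) (2 * 4).
Proof. by apply: small_sos; vm_compute. Qed.
Lemma sp11 : is_SOS 2 (sq 11 12 xs2 es2) (2 * 12).
Proof. by apply: small_sos; vm_compute. Qed.
Lemma sp12 : is_SOS 2 (sq 12 12 xs2 es2) (2 * 12).
Proof. by apply: small_sos; vm_compute. Qed.

Theorem corollary3p10 (q : nat) : (5 <= q)%N ->
  exists s : nat -> 'Z_q, is_SOS 2 s (cor_period q).
Proof.
move=> q5; rewrite /cor_period.
move: (divn_eq q 4) (ltn_pmod q (isT : 0 < 4)).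
move: (q %/ 4) (q %% 4) => K r Hq hr.
case: r Hq hr => [|[|[|[|r]]]] Hq hr //; subst q.
- have [K4|Ks] := leqP 4 K.
    exists (sq (K * 4 + 0) (LL K.-1 true) (xg K.-1 true) (eg K.-1 true)).
    have -> : (K * 4 + 0) * (K * 4 + 0 - 4) %/ 4 = 2 * LL K.-1 true.
      rewrite /LL /c0.
      have -> : (K * 4 + 0) * (K * 4 + 0 - 4) = 4 * (2 * ((2 * K.-1 + 1) * K.-1 + K.-1)).
        have -> : K = K.-1.+1 by lia.
        move: (K.-1) => k; rewrite succnK; nia.
      by rewrite mulKn.
    apply: gen_sos; lia.
  have [->|->] : K = 2 \/ K = 3 by lia.
    by exists (sq 8 4 xs1 es1); exact: sp8.
  by exists (sq 12 12 xs2 es2); exact: sp12.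
- exists (sq (K * 4 + 1) (LL K false) (xg K false) (eg K false)).
  have -> : (K * 4 + 1 + 1) * (K * 4 + 1 - 1) %/ 4 = 2 * LL K false.
    rewrite /LL /c0.
    have -> : (K * 4 + 1 + 1) * (K * 4 + 1 - 1) = 4 * (2 * ((2 * K + 1) * K + 0)) by nia.
    by rewrite mulKn.
  apply: gen_sos => //; lia.
- exists (sq (K * 4 + 2) (LL K false) (xg K false) (eg K false)).
  have -> : (K * 4 + 2) * (K * 4 + 2 - 2) %/ 4 = 2 * LL K false.
    rewrite /LL /c0.
    have -> : (K * 4 + 2) * (K * 4 + 2 - 2) = 4 * (2 * ((2 * K + 1) * K + 0)) by nia.
    by rewrite mulKn.
  apply: gen_sos => //; lia.
- have [K3|Ks] := leqP 3 K.
    exists (sq (K * 4 + 3) (LL K true) (xg K true) (eg K true)).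
    have -> : (K * 4 + 3 + 1) * (K * 4 + 3 - 3) %/ 4 = 2 * LL K true.
      rewrite /LL /c0.
      have -> : (K * 4 + 3 + 1) * (K * 4 + 3 - 3) = 4 * (2 * ((2 * K + 1) * K + K)) by nia.
      by rewrite mulKn.
    apply: gen_sos => //; lia.
  have [->|->] : K = 1 \/ K = 2 by lia.
    by exists (sq 7 4 xs1 es1); exact: sp7.
  by exists (sq 11 12 xs2 es2); exact: sp11.
Qed.
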